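(* Let $(G,Y)$ be a finite $C$-group and let $s=s'\cdot s''\in S(G,Y)^G$ with $\tau_i(s)\ge 2n_ip_i+1$ and $\tau_i(s'')=0$ for some index $i$. Then $s$ can be written in the form $s=s_{\Gamma_i}\cdot s_i\cdot s''$ where $s_i\cdot s''\in S(G,Y)^G$ and $s_{\Gamma_i}=\prod_{j=1}^{n_i}x_{y_{i,j}}^{p_i}$.
   Context: A finite $C$-group is a pair $(G,Y)$ with $Y$ a finite conjugation-invariant subset of the group $G$, $1\notin Y$, such that $G$ has a presentation with generators the elements of $Y$ and defining relations all of the form $z^{-1}yz=y'$ ($y,y',z\in Y$). $Y=C_1\sqcup\dots\sqcup C_m$ is the decomposition into conjugacy classes of $G$, enumerated $C_i=\{y_{i,1},\dots,y_{i,n_i}\}$; $p_i$ is the least $p\ge1$ with $y^p$ central in $G$ for $y\in C_i$. The factorization semigroup $S(G,Y)$ is generated by symbols $x_y$, $y\in Y$, subject to $x_{g_1}x_{g_2}=x_{g_2}x_{g_2^{-1}g_1g_2}=x_{g_1g_2g_1^{-1}}x_{g_1}$ ($g_1,g_2\in Y$). For $s=x_{g_1}\cdots x_{g_n}$, $G_s$ is the subgroup generated by $g_1,\dots,g_n$ (well defined), $S(G,Y)^G=\{s:G_s=G\}$, and $\tau_i(s)$ is the number of factors of $s$ from $\{x_y:y\in C_i\}$. *)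

(* Defs.v *)
From HB Require Import structures.
From mathcomp Require Import all_boot.
Set Implicit Arguments. Unset Strict Implicit. Unset Printing Implicit Defensive.
Local Open Scope group_scope.

(* Groups are arbitrary (possibly infinite) groups: [groupType]
   from mathcomp/boot/monoid.v.  Conjugation [x ^ y] = y^-1 * x * y. *)

Inductive gen_by (G : groupType) (A : pred G) : G -> Prop :=
  | gen_in x : A x -> gen_by A x
  | gen_one : gen_by A 1
  | gen_mul x y : gen_by A x -> gen_by A y -> gen_by A (x * y)
  | gen_inv x : gen_by A x -> gen_by A (x^-1).

Definition generates (G : groupType) (A : pred G) : Prop := forall g : G, gen_by A g.

Definition is_group_hom (G H : groupType) (phi : G -> H) : Prop :=
  forall a b : G, phi (a * b) = phi a * phi b.

(* (G,Y) is a finite C-group: Y finite (a list), conjugation invariant,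
   1 \notin Y, and G has a presentation with generators Y and defining
   relations all of the form z^-1 y z = y' (y,y',z in Y).  The presentation
   condition is rendered by its universal property: Y generates G, and any map
   on Y into a group H respecting all relations z^-1 y z = y' that hold in G
   extends to a homomorphism G -> H. *)
Definition C_group (G : groupType) (Y : seq G) : Prop :=
  [/\ forall y g, y \in Y -> y ^ g \in Y,
      1 \notin Y,
      generates (mem Y) &
      forall (H : groupType) (f : G -> H),
        (forall y z, y \in Y -> z \in Y -> f (y ^ z) = (f z)^-1 * f y * f z) ->
        exists phi : G -> H, is_group_hom phi /\ forall y, y \in Y -> phi y = f y].

(* Elementary Hurwitz-type moves of the factorization semigroup:
   x_{g1} x_{g2} = x_{g2} x_{g2^-1 g1 g2} = x_{g1 g2 g1^-1} x_{g1}.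
   Words x_{g1}...x_{gn} are represented by the list [g1;...;gn]. *)
Inductive hstep (G : groupType) : seq G -> seq G -> Prop :=
  | hstep_r (a b : seq G) (g1 g2 : G) :
      hstep (a ++ g1 :: g2 :: b) (a ++ g2 :: (g2^-1 * g1 * g2) :: b)
  | hstep_l (a b : seq G) (g1 g2 : G) :
      hstep (a ++ g1 :: g2 :: b) (a ++ (g1 * g2 * g1^-1) :: g1 :: b).

(* Equality in S(G,Y): the congruence generated by the moves. *)
Inductive sequiv (G : groupType) : seq G -> seq G -> Prop :=
  | sequiv_refl s : sequiv s s
  | sequiv_step s t : hstep s t -> sequiv s t
  | sequiv_sym s t : sequiv s t -> sequiv t s
  | sequiv_trans s t u : sequiv s t -> sequiv t u -> sequiv s u.

Definition word_over (G : groupType) (Y : seq G) (s : seq G) : bool :=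
  all (fun g => g \in Y) s.

(* s \in S(G,Y)^G : the letters of s generate G, i.e. G_s = G. *)
Definition full_word (G : groupType) (s : seq G) : Prop := generates (mem s).

Definition central (G : groupType) (c : G) : Prop := forall g : G, c * g = g * c.

Definition enum_class (G : groupType) (y0 : G) (e : seq G) : Prop :=
  uniq e /\ forall y : G, y \in e <-> exists g : G, y = y0 ^ g.

Definition least_central_power (G : groupType) (y0 : G) (p : nat) : Prop :=
  (0 < p)%N /\ (forall y g, y = y0 ^ g -> central (y ^+ p)) /\
  forall q : nat, (0 < q)%N -> (forall y g, y = y0 ^ g -> central (y ^+ q)) -> (p <= q)%N.

Definition s_Gamma (G : groupType) (e : seq G) (p : nat) : seq G :=
  flatten [seq nseq p y | y <- e].

(* Main.v *)
Require Import Defs.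
From HB Require Import structures.
From mathcomp Require Import all_boot.
From mathcomp Require Import zify.
Local Open Scope group_scope.
Set Implicit Arguments. Unset Strict Implicit.

Lemma hstep_catl (G : groupType) (a s t : seq G) : hstep s t -> hstep (a ++ s) (a ++ t).
Proof. case=> a0 b g1 g2; rewrite !catA; [exact: hstep_r | exact: hstep_l]. Qed.

Lemma hstep_catr (G : groupType) (c s t : seq G) : hstep s t -> hstep (s ++ c) (t ++ c).
Proof. case=> a0 b g1 g2; rewrite -!catA /=; [exact: hstep_r | exact: hstep_l]. Qed.

Lemma sequiv_catl (G : groupType) (a s t : seq G) : sequiv s t -> sequiv (a ++ s) (a ++ t).
Proof.
elim=> [s0|s0 t0 H|s0 t0 _ IH|s0 t0 u0 _ IH1 _ IH2].
- exact: sequiv_refl.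
- exact/sequiv_step/hstep_catl.
- exact: sequiv_sym.
- exact: sequiv_trans IH1 IH2.
Qed.

Lemma sequiv_catr (G : groupType) (c s t : seq G) : sequiv s t -> sequiv (s ++ c) (t ++ c).
Proof.
elim=> [s0|s0 t0 H|s0 t0 _ IH|s0 t0 u0 _ IH1 _ IH2].
- exact: sequiv_refl.
- exact/sequiv_step/hstep_catr.
- exact: sequiv_sym.
- exact: sequiv_trans IH1 IH2.
Qed.

Lemma hr (G : groupType) (g1 g2 : G) b : sequiv (g1 :: g2 :: b) (g2 :: g1 ^ g2 :: b).
Proof. rewrite conjgE mulgA; exact: (sequiv_step (hstep_r [::] b g1 g2)). Qed.

Lemma hl (G : groupType) (g1 g2 : G) b : sequiv (g1 :: g2 :: b) (g1 * g2 * g1^-1 :: g1 :: b).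
Proof. exact: (sequiv_step (hstep_l [::] b g1 g2)). Qed.

Lemma pull_left (G : groupType) (u w : seq G) (v : G) :
  sequiv (u ++ v :: w) (v :: map (conjg^~ v) u ++ w).
Proof.
elim: u => [|a u IH] /=; first exact: sequiv_refl.
eapply sequiv_trans; first exact: (sequiv_catl [:: a] IH); rewrite /=.
exact: hr.
Qed.

Lemma pass_right (G : groupType) (z d : G) m T :
  sequiv (nseq m z ++ d :: T) (d :: nseq m (z ^ d) ++ T).
Proof.
elim: m => [|m IH] /=; first exact: sequiv_refl.
eapply sequiv_trans; first exact: (sequiv_catl [:: z] IH); rewrite /=.
exact: hr.
Qed.

Lemma pass_left (G : groupType) (z d : G) m T :
  sequiv (nseq m z ++ d :: T) ((z ^+ m * d * (z ^+ m)^-1) :: nseq m z ++ T).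
Proof.
elim: m => [|m IH] /=.
  rewrite expg0 invg1 mul1g mulg1; exact: sequiv_refl.
eapply sequiv_trans; first exact: (sequiv_catl [:: z] IH); rewrite /=.
have -> : z ^+ m.+1 * d * (z ^+ m.+1)^-1 = z * (z ^+ m * d * (z ^+ m)^-1) * z^-1.
  by rewrite expgS invgM !mulgA.
exact: hl.
Qed.

Lemma block_comm (G : groupType) (z : G) p T :
  central (z ^+ p) -> sequiv (nseq p z ++ T) (T ++ nseq p z).
Proof.
move=> Hc; elim: T => [|d T IH].
  rewrite cats0; exact: sequiv_refl.
eapply sequiv_trans; first exact: (pass_left z d p T).
rewrite Hc mulgK.
exact: (sequiv_catl [:: d] IH).
Qed.

Lemma gen_mono (G : groupType) (A B : pred G) g :
  gen_by A g -> (forall x, A x -> gen_by B x) -> gen_by B g.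
Proof.
move=> H HAB; elim: H => [x Hx|| x y _ IHx _ IHy| x _ IHx].
- exact: HAB.
- exact: gen_one.
- exact: gen_mul.
- exact: gen_inv.
Qed.

Lemma block_conj (G : groupType) (y0 : G) p (W : seq G)
  (Hc : forall y g, y = y0 ^ g -> central (y ^+ p)) g :
  gen_by (mem W) g -> forall z h, z = y0 ^ h ->
  sequiv (nseq p z ++ W) (nseq p (z ^ g) ++ W).
Proof.
elim=> [x Hx|| x y _ IHx _ IHy| x _ IHx] z h Ez.
- have /splitPr [W1 W2] := Hx.
  have Hz := Hc z h Ez.
  have Hzx : central ((z ^ x) ^+ p) by apply: (Hc _ (h * x)); rewrite Ez conjgM.
  rewrite catA.
  eapply sequiv_trans; first exact: (sequiv_catr (x :: W2) (block_comm W1 Hz)).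
  rewrite -catA.
  eapply sequiv_trans; first exact: (sequiv_catl W1 (pass_right z x p W2)).
  have -> : W1 ++ x :: nseq p (z ^ x) ++ W2 = (W1 ++ [:: x]) ++ nseq p (z ^ x) ++ W2
    by rewrite -catA.
  have -> : W1 ++ x :: W2 = (W1 ++ [:: x]) ++ W2 by rewrite -catA.
  rewrite (catA (W1 ++ _)) (catA (nseq p _)).
  apply: sequiv_catr; apply: sequiv_sym; exact: block_comm.
- rewrite conjg1; exact: sequiv_refl.
- rewrite conjgM.
  eapply sequiv_trans; first exact: (IHx z h Ez).
  apply: (IHy _ (h * x)); by rewrite Ez conjgM.
- have := IHx (z ^ x^-1) (h * x^-1); rewrite conjgKV => H.
  apply: sequiv_sym; apply: H; by rewrite Ez conjgM.
Qed.

Lemma s_Gamma_cons (G : groupType) (z : G) zs p :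
  s_Gamma (z :: zs) p = nseq p z ++ s_Gamma zs p.
Proof. by []. Qed.

Lemma convert (G : groupType) (y0 : G) p (W : seq G)
  (Hc : forall y g, y = y0 ^ g -> central (y ^+ p)) :
  generates (mem W) -> forall zs ys : seq G, size zs = size ys ->
  (forall z, z \in zs -> exists h, z = y0 ^ h) ->
  (forall y, y \in ys -> exists h, y = y0 ^ h) ->
  sequiv (s_Gamma zs p ++ W) (s_Gamma ys p ++ W).
Proof.
move=> HW; elim=> [|z zs IH] [|y ys] //= Hs Hz Hy.
- exact: sequiv_refl.
have [h Eh] := Hz z (mem_head _ _).
have [h' Eh'] := Hy y (mem_head _ _).
have Hg : gen_by (mem (s_Gamma zs p ++ W)) (h^-1 * h').
  apply: gen_mono (HW _) _ => x Hx; apply: gen_in.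
  change (x \in s_Gamma zs p ++ W); rewrite mem_cat; apply/orP; right; exact: Hx.
rewrite !s_Gamma_cons -!catA.
eapply sequiv_trans; first exact: (block_conj Hc Hg Eh).
have -> : z ^ (h^-1 * h') = y by rewrite Eh -!conjgM mulgA mulgV mul1g Eh'.
apply: sequiv_catl; apply: IH.
- by case: Hs.
- by move=> z0 Hz0; apply: Hz; rewrite inE Hz0 orbT.
- by move=> z0 Hz0; apply: Hy; rewrite inE Hz0 orbT.
Qed.

Lemma conjgvv (G : groupType) (v : G) : v ^ v = v.
Proof. by rewrite conjgE mulKg. Qed.

Lemma conj_class (G : groupType) (y0 : G) (e : seq G)
  (He : forall y : G, y \in e <-> exists g : G, y = y0 ^ g) (v x : G) :
  (x ^ v \in e) = (x \in e).
Proof.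
apply/idP/idP => /He [g Eg]; apply/He.
- exists (g * v^-1); by rewrite conjgM -Eg conjgK.
- exists (g * v); by rewrite conjgM -Eg.
Qed.

Lemma extract1 (G : groupType) (Y e : seq G) (y0 : G)
  (HY : forall y g, y \in Y -> y ^ g \in Y)
  (He : forall y : G, y \in e <-> exists g : G, y = y0 ^ g) (v : G) (R : seq G) :
  v \in e -> (1 < count (pred1 v) R)%N -> word_over Y R ->
  exists R', [/\ sequiv R (v :: R'), word_over Y R',
     (count (pred1 v) R' + 1 = count (pred1 v) R)%N,
     (count (mem e) R' + 1 = count (mem e) R)%N &
     forall x, x \in R -> gen_by (mem R') x].
Proof.
move=> ve Hc HR.
have vR : v \in R by rewrite -has_pred1 has_count; lia.
move: Hc HR; case/splitPr: vR => u w Hc HR.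
exists (map (conjg^~ v) u ++ w); split.
- exact: pull_left.
- move: HR; rewrite /word_over !all_cat all_map /= => /andP [Hu /andP [_ Hw]].
  rewrite Hw andbT; apply/allP => x xu /=; apply: HY; exact: (allP Hu).
- move: Hc; rewrite !count_cat /= count_map.
  have -> : count (preim (conjg^~ v) (pred1 v)) u = count (pred1 v) u.
    apply: eq_count => x /=.
    apply/eqP/eqP => [H|->]; last exact: conjgvv.
    by apply: (@conjg_inj _ v); rewrite H conjgvv.
  rewrite eqxx /=; lia.
- rewrite !count_cat /= count_map.
  have -> : count (preim (conjg^~ v) (mem e)) u = count (mem e) u.
    apply: eq_count => x /=; exact: conj_class He v x.
  rewrite ve /=; lia.
- have vR' : v \in map (conjg^~ v) u ++ w.
    move: Hc; rewrite !count_cat /= eqxx /= mem_cat => Hc.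
    apply/orP; case: (boolP (v \in w)) => vw; first by right.
    left; apply/mapP; exists v; last by rewrite conjgE mulKg.
    rewrite -has_pred1 has_count.
    move: vw; rewrite -has_pred1 has_count -leqNgt => vw.
    move: Hc vw; move: (count (pred1 v) u) (count (pred1 v) w) => a b; lia.
  move=> x; rewrite mem_cat inE => /orP [xu | /orP [/eqP -> | xw]].
  + have -> : x = v * (x ^ v * v^-1) by rewrite conjgE !mulgA mulgV mul1g mulgK.
    apply: gen_mul; first exact: gen_in.
    apply: gen_mul; last exact/gen_inv/gen_in.
    apply: gen_in; change (x ^ v \in map (conjg^~ v) u ++ w).
    rewrite mem_cat; apply/orP; left; exact: (map_f (conjg^~ v) xu).
  + exact: gen_in.
  + apply: gen_in; change (x \in map (conjg^~ v) u ++ w).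
    by rewrite mem_cat xw orbT.
Qed.

Lemma extractm (G : groupType) (Y e : seq G) (y0 : G)
  (HY : forall y g, y \in Y -> y ^ g \in Y)
  (He : forall y : G, y \in e <-> exists g : G, y = y0 ^ g) (v : G) (ve : v \in e) :
  forall m (R : seq G), (m < count (pred1 v) R)%N -> word_over Y R ->
  exists R', [/\ sequiv R (nseq m v ++ R'), word_over Y R',
     (count (mem e) R' + m = count (mem e) R)%N &
     forall x, x \in R -> gen_by (mem R') x].
Proof.
elim=> [|m IH] R Hc HR.
  exists R; split; [exact: sequiv_refl | done | by rewrite addn0 |].
  by move=> x xR; exact: gen_in.
have [|R1 [H1 HR1 Hc1 He1 Hg1]] := extract1 HY He ve _ HR; first lia.
have [|R' [H' HR' He' Hg']] := IH R1 _ HR1; first lia.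
exists R'; split => //.
- eapply sequiv_trans; first exact: H1.
  exact: (sequiv_catl [:: v] H').
- lia.
- move=> x xR; apply: gen_mono (Hg1 x xR) _ => y yR1; exact: Hg'.
Qed.

Lemma count_cons_le (T : eqType) (v : T) (e R : seq T) :
  (count (mem (v :: e)) R <= count (pred1 v) R + count (mem e) R)%N.
Proof.
elim: R => //= x R IH; rewrite in_cons.
case: (x == v); case: (x \in e) => /=; lia.
Qed.

Lemma pigeon (T : eqType) (e R : seq T) p :
  (size e * p < count (mem e) R)%N -> exists2 v, v \in e & (p < count (pred1 v) R)%N.
Proof.
move=> Hlt.
case: (boolP (has (fun v => p < count (pred1 v) R)%N e)) => [/hasP [v ve Hv]|Hn].
  by exists v.
suff : (count (mem e) R <= size e * p)%N by lia.
elim: e {Hlt} Hn => [|v e IH] /=.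
  by move=> _; rewrite (@eq_count _ _ pred0) ?count_pred0.
rewrite negb_or -leqNgt => /andP [Hv Hn].
have := count_cons_le v e R; have := IH Hn; rewrite mulSn; lia.
Qed.

Unset Implicit Arguments.
Set Strict Implicit.

Theorem corollary2p8 (G : groupType) (Y : seq G) (y0 : G) (e : seq G) (p : nat)
    (s' s'' : seq G) :
  C_group Y ->
  y0 \in Y ->
  enum_class y0 e ->
  least_central_power y0 p ->
  word_over Y s' -> word_over Y s'' ->
  full_word (s' ++ s'') ->
  (2 * size e * p + 1 <= count (mem e) (s' ++ s''))%N ->
  count (mem e) s'' = 0%N ->
  exists si : seq G,
    [/\ word_over Y si,
        sequiv (s' ++ s'') (s_Gamma e p ++ si ++ s'') &
        full_word (si ++ s'')].
Proof.
case=> HY _ _ _ _ [_ He] [_ [Hc _]] Hs' _ Hfull Htau Hs''.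
have key : forall k, (k <= size e)%N -> exists zs R,
    [/\ size zs = k, (forall z, z \in zs -> z \in e), word_over Y R,
        (count (mem e) R + k * p = count (mem e) (s' ++ s''))%N &
        generates (mem (R ++ s'')) /\
        sequiv (s' ++ s'') (s_Gamma zs p ++ R ++ s'')].
  elim=> [|k IH] Hk.
    exists [::], s'; split.
    - by [].
    - by [].
    - exact: Hs'.
    - by rewrite count_cat Hs'' mul0n !addn0.
    - split; first exact: Hfull. exact: sequiv_refl.
  have Hk' : (k <= size e)%N by apply: ltnW.
  have [zs [R [Hsz Hzs HR Hcnt [HgR Hseq]]]] := IH Hk'.
  have Hlt : (size e * p < count (mem e) R)%N.
    have : (k.+1 * p <= size e * p)%N by apply: leq_mul.
    rewrite mulSn; nia.
  have [v ve Hv] := pigeon Hlt.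
  have [R' [H1 HR' Hc' Hg']] := extractm HY He ve Hv HR.
  exists (zs ++ [:: v]), R'; split.
  - by rewrite size_cat Hsz addn1.
  - by move=> z; rewrite mem_cat inE => /orP [/Hzs | /eqP ->].
  - exact: HR'.
  - rewrite mulSnr; lia.
  split.
  - move=> g; apply: gen_mono (HgR g) _ => x; rewrite /= mem_cat => /orP [xR|xs].
      apply: gen_mono (Hg' x xR) _ => y yR; apply: gen_in.
      change (y \in R' ++ s''); rewrite mem_cat; apply/orP; left; exact: yR.
    apply: gen_in; change (x \in R' ++ s''); rewrite mem_cat; apply/orP; right; exact: xs.
  - eapply sequiv_trans; first exact: Hseq.
    rewrite /s_Gamma map_cat flatten_cat /= cats0 -/(s_Gamma zs p) -catA.
    apply: sequiv_catl; rewrite catA; exact: sequiv_catr.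
have [zs [R [Hsz Hzs HR _ [HgR Hseq]]]] := key _ (leqnn _).
exists R; split => //.
eapply sequiv_trans; first exact: Hseq.
apply: (convert Hc HgR) => //.
- by move=> z /Hzs /He.
- by move=> y /He.
Qed.
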